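(* Let $\Omega=(0,1)^2$, let $N$ be an even positive integer, $h=1/N$, and let $\mathcal T_h=\{Q_{jk}\}_{j,k=1}^N$ be the uniform partition of $\Omega$ into squares $Q_{jk}=((j-1)h,jh)\times((k-1)h,kh)$. Let real coefficients $\xi_{jk},\eta_{jk}$ ($1\le j,k\le N-1$) be given and set $$\mathbf u_h=\sum_{j,k=1}^{N-1}\binom{\xi_{jk}}{\eta_{jk}}\phi_{jk}+\binom{1/2}{0}\Big[\sum_{j=1}^{N-1}\phi_{j,N}+\psi_{2,TL}+\psi_{2,TR}\Big],$$ with $\phi_{jk}$, $\psi_{2,TL}$, $\psi_{2,TR}$ as described in the context. Suppose that $$\sum_{Q\in\mathcal T_h}\int_Q(\nabla\cdot\mathbf u_h)\,q_h\,d\mathbf x=0\qquad\text{for all } q_h\in\widetilde{\mathscr P}_0^h .$$ Then $$\Big|\int_{Q_{jk}}\nabla\cdot\mathbf u_h\,d\mathbf x\Big|=h^3\qquad\text{for all } Q_{jk}\in\mathcal T_h,$$ and these integrals alternate in sign in a checkerboard pattern: there is a number $\gamma$ with $|\gamma|=h^3$ such that $\int_{Q_{jk}}\nabla\cdot\mathbf u_h\,d\mathbf x=\gamma$ whenever $j+k$ is even and $=-\gamma$ whenever $j+k$ is odd.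
   Context: Divergence and gradients are taken elementwise on each square $Q\in\mathcal T_h$. Nonconforming $P_1$ basis functions: for a vertex $V_{jk}=(jh,kh)$ with $1\le j\le N-1$, $1\le k\le N$, $\phi_{jk}$ is the function which on each square $Q\in\mathcal T_h$ is a polynomial of degree at most one, is supported on the (at most four) squares having $V_{jk}$ as a vertex, and on each such square takes the value $1$ at the midpoints of the two edges of that square having $V_{jk}$ as an endpoint and the value $0$ at the midpoints of the other two edges. (So for $k\le N-1$ these are the usual basis functions of the $P_1$-nonconforming quadrilateral space vanishing at boundary edge midpoints; $\phi_{j,N}$, attached to a vertex on the top side $y=1$, is supported on $Q_{j,N}\cup Q_{j+1,N}$ and equals $1$ at the top-edge midpoints $((j-\tfrac12)h,1)$, $((j+\tfrac12)h,1)$.) DSSY corner functions: on the reference square $\widehat Q=[-1,1]^2$ let $\theta(t)=t^2-\tfrac53 t^4$ and $\widehat\psi_2(\widehat x,\widehat y)=\tfrac14+\tfrac12\widehat y+\tfrac38\big(\theta(\widehat x)-\theta(\widehat y)\big)$, which equals $1$ at the edge midpoint $(0,1)$ and $0$ at the edge midpoints $(1,0),(-1,0),(0,-1)$. For a square $Q$ with center $c_Q$ let $F_Q(\widehat x,\widehat y)=c_Q+\tfrac h2(\widehat x,\widehat y)$. Then $\psi_{2,TL}=\widehat\psi_2\circ F_{Q_{1N}}^{-1}$ on $Q_{1N}$ and $0$ elsewhere, and $\psi_{2,TR}=\widehat\psi_2\circ F_{Q_{NN}}^{-1}$ on $Q_{NN}$ and $0$ elsewhere (the top-left and top-right corner squares).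 Pressure space: call $Q_{jk}$ red if $j+k$ is even and black if $j+k$ is odd, and let $\Omega^R,\Omega^B$ be the unions of red, respectively black, squares. $\widetilde{\mathscr P}_0^h$ is the space of functions that are constant on each $Q_{jk}$ and satisfy $\int_{\Omega^R}q_h\,d\mathbf x=0$ and $\int_{\Omega^B}q_h\,d\mathbf x=0$ (equivalently, the direct sum of the mean-zero piecewise constants supported on red squares and those supported on black squares; its dimension is $N^2-2$). *)

(* Defs.v *)
From Stdlib Require Import Reals Arith Bool.
From Coquelicot Require Import Coquelicot.
Open Scope R_scope.
Local Open Scope bool_scope.

Fixpoint sum1 (n : nat) (f : nat -> R) : R :=
  match n with
  | O => 0
  | S m => sum1 m f + f (S m)
  end.

Definition hN (N : nat) : R := / INR N.

(* Local reference coordinates on Q_{ab} = ((a-1)h, ah) x ((b-1)h, bh):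
   F_Q(xh,yh) = c_Q + h/2 (xh,yh), so xh = 2 (x - c_x)/h. *)
Definition locx (N a : nat) (x : R) : R := 2 * (x - (INR a - /2) * hN N) / hN N.
Definition locy (N b : nat) (y : R) : R := 2 * (y - (INR b - /2) * hN N) / hN N.

(* Position of grid index j relative to square index a:
   vertex column j is the right side (j = a, sign +1) or the left side
   (j = a-1, sign -1) of Q_{a.}, or not a side of it. *)
Definition side (j a : nat) : option R :=
  if Nat.eqb j a then Some 1 else if Nat.eqb (S j) a then Some (-1) else None.

(* Restriction to Q_{ab} of the nonconforming P1 basis function phi_{jk}
   attached to V_{jk} = (jh,kh), written as the polynomial (extended to R^2).
   In reference coordinates, with V_{jk} = corner (s,t) of [-1,1]^2, the unique
   affine function equal to 1 at midpoints (s,0),(0,t) and 0 at (-s,0),(0,-t)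
   is (1 + s xh + t yh)/2. It is 0 on squares not having V_{jk} as vertex. *)
Definition phiQ (N j k a b : nat) (x y : R) : R :=
  match side j a, side k b with
  | Some s, Some t => (1 + s * locx N a x + t * locy N b y) / 2
  | _, _ => 0
  end.

Definition theta (t : R) : R := t ^ 2 - 5 / 3 * t ^ 4.
Definition psi2hat (xh yh : R) : R := / 4 + / 2 * yh + 3 / 8 * (theta xh - theta yh).

Definition psiTLQ (N a b : nat) (x y : R) : R :=
  if andb (Nat.eqb a 1) (Nat.eqb b N) then psi2hat (locx N a x) (locy N b y) else 0.
Definition psiTRQ (N a b : nat) (x y : R) : R :=
  if andb (Nat.eqb a N) (Nat.eqb b N) then psi2hat (locx N a x) (locy N b y) else 0.

Definition uh1Q (N : nat) (xi : nat -> nat -> R) (a b : nat) (x y : R) : R :=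
  sum1 (N - 1) (fun j => sum1 (N - 1) (fun k => xi j k * phiQ N j k a b x y))
  + / 2 * (sum1 (N - 1) (fun j => phiQ N j N a b x y)
           + psiTLQ N a b x y + psiTRQ N a b x y).
Definition uh2Q (N : nat) (eta : nat -> nat -> R) (a b : nat) (x y : R) : R :=
  sum1 (N - 1) (fun j => sum1 (N - 1) (fun k => eta j k * phiQ N j k a b x y)).

Definition divQ (N : nat) (xi eta : nat -> nat -> R) (a b : nat) (x y : R) : R :=
  Derive (fun t => uh1Q N xi a b t y) x + Derive (fun t => uh2Q N eta a b x t) y.

Definition sqint (N a b : nat) (f : R -> R -> R) : R :=
  RInt (fun x => RInt (fun y => f x y) ((INR b - 1) * hN N) (INR b * hN N))
       ((INR a - 1) * hN N) (INR a * hN N).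

(* Main.v *)
Require Import Defs.
From Stdlib Require Import Reals Arith Bool Lia Lra.
From Coquelicot Require Import Coquelicot.
Open Scope R_scope.

Lemma sum1_plus n f g : sum1 n (fun i => f i + g i) = sum1 n f + sum1 n g.
Proof. induction n; simpl; [ring| rewrite IHn; ring]. Qed.
Lemma sum1_minus n f g : sum1 n (fun i => f i - g i) = sum1 n f - sum1 n g.
Proof. induction n; simpl; [ring| rewrite IHn; ring]. Qed.
Lemma sum1_scal n c f : sum1 n (fun i => c * f i) = c * sum1 n f.
Proof. induction n; simpl; [ring| rewrite IHn; ring]. Qed.
Lemma sum1_ext n f g : (forall i, (1 <= i <= n)%nat -> f i = g i) -> sum1 n f = sum1 n g.
Proof. induction n; intros H; simpl; auto. rewrite IHn, (H (S n)); [reflexivity| lia |]. intros; apply H; lia. Qed.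
Lemma sum1_swap n m f : sum1 n (fun a => sum1 m (fun b => f a b)) = sum1 m (fun b => sum1 n (fun a => f a b)).
Proof. induction n; simpl. { induction m; simpl; [auto|rewrite <- IHm; ring]. }
 rewrite IHn. rewrite <- sum1_plus. reflexivity. Qed.
Lemma sum1_point n c F : sum1 n (fun a => if Nat.eqb a c then F a else 0) =
  if andb (Nat.leb 1 c) (Nat.leb c n) then F c else 0.
Proof. induction n; cbn [sum1].
 - destruct c; reflexivity.
 - rewrite IHn. destruct (Nat.eqb_spec (S n) c).
   + subst. replace (Nat.leb 1 (S n)) with true by (symmetry; apply Nat.leb_le; lia).
     replace (Nat.leb (S n) n) with false by (symmetry; apply Nat.leb_gt; lia).
     replace (Nat.leb (S n) (S n)) with true by (symmetry; apply Nat.leb_le; lia). cbn [andb]. ring.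
   + destruct (Nat.leb_spec c n); destruct (Nat.leb_spec c (S n)); try lia; rewrite ?andb_false_r, ?andb_true_r; ring. Qed.
Lemma is_derive_sum1 n (f : nat -> R -> R) df x :
  (forall i, is_derive (f i) x (df i)) -> is_derive (fun t => sum1 n (fun i => f i t)) x (sum1 n df).
Proof. intros H; induction n; simpl. apply (is_derive_const (K:=R_AbsRing) (V:=R_NormedModule) 0 x). apply (is_derive_plus (fun t => sum1 n (fun i => f i t)) (f (S n))); auto. Qed.

Definition sx j a := match side j a with Some s => s | None => 0 end.
Definition ty k b := match side k b with Some _ => 1 | None => 0 end.

Lemma hN_pos N : (0 < N)%nat -> 0 < hN N.
Proof. intros; unfold hN; apply Rinv_0_lt_compat, lt_0_INR; auto. Qed.

Lemma dphix N j k a b y x : (0<N)%nat -> is_derive (fun t => phiQ N j k a b t y) x (sx j a * ty k b / hN N).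
Proof. intros HN. pose proof (hN_pos N HN). unfold phiQ, sx, ty.
 destruct (side j a), (side k b); try (match goal with |- is_derive _ _ ?l => replace l with 0 by (unfold Rdiv; ring) end; apply (is_derive_const (K:=R_AbsRing) (V:=R_NormedModule) 0 x)).
 unfold locx, locy. auto_derive; auto. field. lra. Qed.
Lemma dphiy N j k a b y x : (0<N)%nat -> is_derive (fun t => phiQ N j k a b x t) y (ty j a * sx k b / hN N).
Proof. intros HN. pose proof (hN_pos N HN). unfold phiQ, sx, ty.
 destruct (side j a), (side k b); try (match goal with |- is_derive _ _ ?l => replace l with 0 by (unfold Rdiv; ring) end; apply (is_derive_const (K:=R_AbsRing) (V:=R_NormedModule) 0 y)).
 unfold locx, locy. auto_derive; auto. field. lra. Qed.

Definition cTL N a b := andb (Nat.eqb a 1) (Nat.eqb b N).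
Definition cTR N a b := andb (Nat.eqb a N) (Nat.eqb b N).
Definition dth N a x := 3 / 8 * (2 * locx N a x - 20 / 3 * locx N a x ^ 3) * (2 / hN N).
Definition Pd N a b x := / 2 * ((if cTL N a b then dth N a x else 0) + (if cTR N a b then dth N a x else 0)).
Definition Fp N a b x := / 2 * ((if cTL N a b then 3/8 * theta (locx N a x) else 0) + (if cTR N a b then 3/8 * theta (locx N a x) else 0)).

Lemma dpsi N a b y x : (0<N)%nat -> is_derive (fun t => psi2hat (locx N a t) (locy N b y)) x (dth N a x).
Proof. intros HN. pose proof (hN_pos N HN). unfold psi2hat, theta, dth, locx, locy. auto_derive; auto. field. lra. Qed.
Lemma dth_F N a b x : (0<N)%nat -> is_derive (Fp N a b) x (Pd N a b x).
Proof. intros HN. pose proof (hN_pos N HN). unfold Fp, Pd.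
 apply (is_derive_scal (fun t => (if cTL N a b then 3/8 * theta (locx N a t) else 0) + (if cTR N a b then 3/8 * theta (locx N a t) else 0))).
 apply (is_derive_plus (fun t => (if cTL N a b then 3/8 * theta (locx N a t) else 0)) (fun t => (if cTR N a b then 3/8 * theta (locx N a t) else 0)));
 [destruct (cTL N a b) | destruct (cTR N a b)];
 try (apply (is_derive_const (K:=R_AbsRing) (V:=R_NormedModule) 0 x));
 unfold theta, dth, locx; auto_derive; auto; field; lra. Qed.

Definition Kx N xi a b := sum1 (N - 1) (fun j => sum1 (N - 1) (fun k => xi j k * (sx j a * ty k b / hN N)))
  + / 2 * sum1 (N - 1) (fun j => sx j a * ty N b / hN N).
Definition Ky N eta a b := sum1 (N - 1) (fun j => sum1 (N - 1) (fun k => eta j k * (ty j a * sx k b / hN N))).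

Lemma divQ_eq N xi eta a b x y : (0<N)%nat -> divQ N xi eta a b x y = Kx N xi a b + Ky N eta a b + Pd N a b x.
Proof. intros HN. unfold divQ.
 rewrite (is_derive_unique _ _ (Kx N xi a b + Pd N a b x)).
 rewrite (is_derive_unique _ _ (Ky N eta a b)). ring.
 - unfold uh2Q, Ky. apply (is_derive_sum1 _ (fun j t => sum1 (N - 1) (fun k => eta j k * phiQ N j k a b x t))).
   intros j. apply (is_derive_sum1 _ (fun k t => eta j k * phiQ N j k a b x t)). intros k.
   apply (is_derive_scal (fun t => phiQ N j k a b x t)). apply dphiy; auto.
 - unfold uh1Q, Kx, Pd, psiTLQ, psiTRQ. fold (cTL N a b). fold (cTR N a b).
   replace (sum1 (N - 1) (fun j => sum1 (N - 1) (fun k => xi j k * (sx j a * ty k b / hN N))) +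
    / 2 * sum1 (N - 1) (fun j => sx j a * ty N b / hN N) +
    / 2 * ((if cTL N a b then dth N a x else 0) + (if cTR N a b then dth N a x else 0)))
   with (sum1 (N - 1) (fun j => sum1 (N - 1) (fun k => xi j k * (sx j a * ty k b / hN N))) +
    / 2 * (sum1 (N - 1) (fun j => sx j a * ty N b / hN N) +
    (if cTL N a b then dth N a x else 0) + (if cTR N a b then dth N a x else 0))) by ring.
   apply (is_derive_plus (fun t => sum1 (N - 1) (fun j => sum1 (N - 1) (fun k => xi j k * phiQ N j k a b t y)))
     (fun t => / 2 * (sum1 (N - 1) (fun j => phiQ N j N a b t y) + (if cTL N a b then psi2hat (locx N a t) (locy N b y) else 0) + (if cTR N a b then psi2hat (locx N a t) (locy N b y) else 0)))).
   + apply (is_derive_sum1 _ (fun j t => sum1 (N - 1) (fun k => xi j k * phiQ N j k a b t y))).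
     intros j. apply (is_derive_sum1 _ (fun k t => xi j k * phiQ N j k a b t y)). intros k.
     apply (is_derive_scal (fun t => phiQ N j k a b t y)). apply dphix; auto.
   + apply (is_derive_scal (fun t => (sum1 (N - 1) (fun j => phiQ N j N a b t y) + (if cTL N a b then psi2hat (locx N a t) (locy N b y) else 0) + (if cTR N a b then psi2hat (locx N a t) (locy N b y) else 0)))).
     apply (is_derive_plus (fun t => (sum1 (N - 1) (fun j => phiQ N j N a b t y) + (if cTL N a b then psi2hat (locx N a t) (locy N b y) else 0))) (fun t => (if cTR N a b then psi2hat (locx N a t) (locy N b y) else 0))).
     apply (is_derive_plus (fun t => (sum1 (N - 1) (fun j => phiQ N j N a b t y))) (fun t => (if cTL N a b then psi2hat (locx N a t) (locy N b y) else 0))).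
     * apply (is_derive_sum1 _ (fun j t => phiQ N j N a b t y)). intros; apply dphix; auto.
     * destruct (cTL N a b); [apply dpsi; auto| apply (is_derive_const (K:=R_AbsRing) (V:=R_NormedModule) 0 x)].
     * destruct (cTR N a b); [apply dpsi; auto| apply (is_derive_const (K:=R_AbsRing) (V:=R_NormedModule) 0 x)].
Qed.

Lemma sqint_K N a b K c : (0<N)%nat ->
  sqint N a b (fun x y => (K + Pd N a b x) * c) = hN N * hN N * K * c.
Proof. intros HN. pose proof (hN_pos N HN) as Hh. unfold sqint.
 rewrite (RInt_ext (fun x => RInt (fun _ => (K + Pd N a b x) * c) ((INR b - 1) * hN N) (INR b * hN N))
   (fun x => hN N * ((K + Pd N a b x) * c))).
 2:{ intros x _. rewrite RInt_const. unfold scal; simpl; unfold mult; simpl. ring. }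
 apply is_RInt_unique.
 replace (hN N * hN N * K * c) with (minus ((fun x => hN N * c * (K * x + Fp N a b x)) (INR a * hN N))
   ((fun x => hN N * c * (K * x + Fp N a b x)) ((INR a - 1) * hN N))).
 - apply (is_RInt_derive (V:=R_CompleteNormedModule) (fun x => hN N * c * (K * x + Fp N a b x))).
   + intros x _. 
     replace (hN N * ((K + Pd N a b x) * c)) with (hN N * c * (K * 1 + Pd N a b x)) by ring.
     apply (is_derive_scal (fun x => K * x + Fp N a b x)).
     apply (is_derive_plus (fun x => K * x) (Fp N a b)).
     * apply (is_derive_scal (fun x => x)). apply (is_derive_id (K:=R_AbsRing)).
     * apply dth_F; auto.
   + intros x _. apply (ex_derive_continuous (K:=R_AbsRing) (V:=R_NormedModule) (fun x => hN N * ((K + Pd N a b x) * c))). unfold Pd, dth, locx.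
     destruct (cTL N a b), (cTR N a b); auto_derive; auto.
 - unfold minus, plus, opp; simpl. unfold Fp.
   assert (E1 : locx N a (INR a * hN N) = 1) by (unfold locx; field; lra).
   assert (E2 : locx N a ((INR a - 1) * hN N) = -1) by (unfold locx; field; lra).
   rewrite E1, E2. unfold theta.
   destruct (cTL N a b), (cTR N a b); field.
Qed.

Lemma sx_eq j a : sx j a = (if Nat.eqb a j then 1 else 0) - (if Nat.eqb a (S j) then 1 else 0).
Proof. unfold sx, side. destruct (Nat.eqb_spec j a), (Nat.eqb_spec a j), (Nat.eqb_spec (S j) a), (Nat.eqb_spec a (S j)); subst; try lia; ring. Qed.
Lemma ty_eq j a : ty j a = (if Nat.eqb a j then 1 else 0) + (if Nat.eqb a (S j) then 1 else 0).
Proof. unfold ty, side. destruct (Nat.eqb_spec j a), (Nat.eqb_spec a j), (Nat.eqb_spec (S j) a), (Nat.eqb_spec a (S j)); subst; try lia; ring. Qed.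

Lemma leb_t x y : (x <= y)%nat -> Nat.leb x y = true.
Proof. apply Nat.leb_le. Qed.
Lemma leb_f x y : (y < x)%nat -> Nat.leb x y = false.
Proof. apply Nat.leb_gt. Qed.

Lemma sum_sx n j F : (1 <= j)%nat -> (S j <= n)%nat -> sum1 n (fun a => sx j a * F a) = F j - F (S j).
Proof. intros. rewrite (sum1_ext _ _ (fun a => (if Nat.eqb a j then F a else 0) - (if Nat.eqb a (S j) then F a else 0))).
 rewrite sum1_minus, !sum1_point, !leb_t by lia. reflexivity.
 intros a _. rewrite sx_eq. destruct (Nat.eqb a j), (Nat.eqb a (S j)); ring. Qed.
Lemma sum_ty n j F : (1 <= j)%nat -> (S j <= n)%nat -> sum1 n (fun a => ty j a * F a) = F j + F (S j).
Proof. intros. rewrite (sum1_ext _ _ (fun a => (if Nat.eqb a j then F a else 0) + (if Nat.eqb a (S j) then F a else 0))).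
 rewrite sum1_plus, !sum1_point, !leb_t by lia. reflexivity.
 intros a _. rewrite ty_eq. destruct (Nat.eqb a j), (Nat.eqb a (S j)); ring. Qed.
Lemma sum_tyN n F : (1 <= n)%nat -> sum1 n (fun a => ty n a * F a) = F n.
Proof. intros. rewrite (sum1_ext _ _ (fun a => (if Nat.eqb a n then F a else 0) + (if Nat.eqb a (S n) then F a else 0))).
 rewrite sum1_plus, !sum1_point, !leb_t, (leb_f (S n) n) by lia. simpl. ring.
 intros a _. rewrite ty_eq. destruct (Nat.eqb a n), (Nat.eqb a (S n)); ring. Qed.

Lemma loc_x n w j k h : (1 <= j)%nat -> (S j <= n)%nat -> (1 <= k)%nat -> (S k <= n)%nat ->
  sum1 n (fun a => sum1 n (fun b => w a b * (sx j a * ty k b / h))) = (w j k + w j (S k) - w (S j) k - w (S j) (S k)) / h.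
Proof. intros.
 transitivity (sum1 n (fun a => sx j a * ((w a k + w a (S k)) / h))).
 - apply sum1_ext; intros a _. transitivity (sx j a * sum1 n (fun b => ty k b * (w a b / h))).
   rewrite <- sum1_scal. apply sum1_ext; intros; unfold Rdiv; ring. rewrite sum_ty by lia. unfold Rdiv; ring.
 - rewrite sum_sx by lia. unfold Rdiv; ring. Qed.
Lemma loc_xN n w j h : (1 <= j)%nat -> (S j <= n)%nat ->
  sum1 n (fun a => sum1 n (fun b => w a b * (sx j a * ty n b / h))) = (w j n - w (S j) n) / h.
Proof. intros.
 transitivity (sum1 n (fun a => sx j a * (w a n / h))).
 - apply sum1_ext; intros a _. transitivity (sx j a * sum1 n (fun b => ty n b * (w a b / h))).
   rewrite <- sum1_scal. apply sum1_ext; intros; unfold Rdiv; ring. rewrite sum_tyN by lia. unfold Rdiv; ring.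
 - rewrite sum_sx by lia. unfold Rdiv; ring. Qed.
Lemma loc_y n w j k h : (1 <= j)%nat -> (S j <= n)%nat -> (1 <= k)%nat -> (S k <= n)%nat ->
  sum1 n (fun a => sum1 n (fun b => w a b * (ty j a * sx k b / h))) = (w j k - w j (S k) + w (S j) k - w (S j) (S k)) / h.
Proof. intros.
 transitivity (sum1 n (fun a => ty j a * ((w a k - w a (S k)) / h))).
 - apply sum1_ext; intros a _. transitivity (ty j a * sum1 n (fun b => sx k b * (w a b / h))).
   rewrite <- sum1_scal. apply sum1_ext; intros; unfold Rdiv; ring. rewrite sum_sx by lia. unfold Rdiv; ring.
 - rewrite sum_ty by lia. unfold Rdiv; ring. Qed.

Lemma dsum_scal n m c f : sum1 n (fun a => sum1 m (fun b => c * f a b)) = c * sum1 n (fun a => sum1 m (fun b => f a b)).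
Proof. rewrite <- sum1_scal. apply sum1_ext; intros. apply sum1_scal. Qed.
Lemma dsum_plus n m f g : sum1 n (fun a => sum1 m (fun b => f a b + g a b)) = sum1 n (fun a => sum1 m (fun b => f a b)) + sum1 n (fun a => sum1 m (fun b => g a b)).
Proof. rewrite <- sum1_plus. apply sum1_ext; intros. apply sum1_plus. Qed.
Lemma dsum_minus n m f g : sum1 n (fun a => sum1 m (fun b => f a b - g a b)) = sum1 n (fun a => sum1 m (fun b => f a b)) - sum1 n (fun a => sum1 m (fun b => g a b)).
Proof. rewrite <- sum1_minus. apply sum1_ext; intros. apply sum1_minus. Qed.

Lemma dsum_lin2 n m p (w : nat -> nat -> R) g :
 sum1 n (fun a => sum1 m (fun b => w a b * sum1 p (fun j => g j a b))) = sum1 p (fun j => sum1 n (fun a => sum1 m (fun b => w a b * g j a b))).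
Proof.
 transitivity (sum1 n (fun a => sum1 m (fun b => sum1 p (fun j => w a b * g j a b)))).
 { apply sum1_ext; intros; apply sum1_ext; intros. symmetry; apply sum1_scal. }
 rewrite (sum1_ext n _ (fun a => sum1 p (fun j => sum1 m (fun b => w a b * g j a b)))) by (intros; apply sum1_swap).
 apply sum1_swap. Qed.
Lemma dsum_lin4 n m p q (w : nat -> nat -> R) (c : nat -> nat -> R) g :
 sum1 n (fun a => sum1 m (fun b => w a b * sum1 p (fun j => sum1 q (fun k => c j k * g j k a b)))) =
 sum1 p (fun j => sum1 q (fun k => c j k * sum1 n (fun a => sum1 m (fun b => w a b * g j k a b)))).
Proof. rewrite dsum_lin2. apply sum1_ext; intros j _.
 rewrite (sum1_ext n _ (fun a => sum1 m (fun b => sum1 q (fun k => w a b * (c j k * g j k a b))))).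
 2:{ intros; apply sum1_ext; intros; symmetry; apply sum1_scal. }
 rewrite (sum1_ext n _ (fun a => sum1 q (fun k => sum1 m (fun b => w a b * (c j k * g j k a b))))) by (intros; apply sum1_swap).
 rewrite sum1_swap. apply sum1_ext; intros k _. rewrite <- dsum_scal. apply sum1_ext; intros; apply sum1_ext; intros; ring. Qed.

Lemma sum1_zero n : sum1 n (fun _ => 0) = 0.
Proof. induction n; simpl; [|rewrite IHn]; ring. Qed.

Lemma Wsum N xi eta (w : nat -> nat -> R) : (2 <= N)%nat ->
 (forall a b, w a b + w a (S b) = w (S a) b + w (S a) (S b)) ->
 (forall a b, w a b + w (S a) b = w a (S b) + w (S a) (S b)) ->
 sum1 N (fun a => sum1 N (fun b => w a b * (hN N * hN N * (Kx N xi a b + Ky N eta a b)))) =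
 hN N * hN N * / 2 * sum1 (N - 1) (fun j => (w j N - w (S j) N) / hN N).
Proof. intros HN H1 H2. unfold Kx, Ky.
 set (h := hN N).
 rewrite (sum1_ext N _ (fun a => sum1 N (fun b =>
   h * h * (w a b * sum1 (N - 1) (fun j => sum1 (N - 1) (fun k => xi j k * (sx j a * ty k b / h)))) +
   h * h * / 2 * (w a b * sum1 (N - 1) (fun j => sx j a * ty N b / h)) +
   h * h * (w a b * sum1 (N - 1) (fun j => sum1 (N - 1) (fun k => eta j k * (ty j a * sx k b / h))))))).
 2:{ intros; apply sum1_ext; intros; ring. }
 rewrite !dsum_plus, !dsum_scal.
 rewrite (dsum_lin4 N N (N-1) (N-1) w xi (fun j k a b => sx j a * ty k b / h)).
 rewrite (dsum_lin4 N N (N-1) (N-1) w eta (fun j k a b => ty j a * sx k b / h)).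
 rewrite (dsum_lin2 N N (N-1) w (fun j a b => sx j a * ty N b / h)).
 rewrite (sum1_ext (N-1) (fun j => sum1 (N - 1) (fun k => xi j k * _)) (fun _ => 0)).
 2:{ intros j Hj. rewrite <- (sum1_zero (N-1)). apply sum1_ext; intros k Hk.
     rewrite (loc_x N w j k h) by lia. replace (w j k + w j (S k) - w (S j) k - w (S j) (S k)) with 0 by (pose proof (H1 j k); lra).
     unfold Rdiv; ring. }
 rewrite (sum1_ext (N-1) (fun j => sum1 (N - 1) (fun k => eta j k * _)) (fun _ => 0)).
 2:{ intros j Hj. rewrite <- (sum1_zero (N-1)). apply sum1_ext; intros k Hk.
     rewrite (loc_y N w j k h) by lia. replace (w j k - w j (S k) + w (S j) k - w (S j) (S k)) with 0 by (pose proof (H2 j k); lra).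
     unfold Rdiv; ring. }
 rewrite (sum1_ext (N-1) (fun j => sum1 N (fun a => sum1 N (fun b => w a b * (sx j a * ty N b / h)))) (fun j => (w j N - w (S j) N) / h)).
 2:{ intros j Hj. apply loc_xN; lia. }
 rewrite !sum1_zero. ring. Qed.

Lemma sqint_ext N a b f g : (forall x y, f x y = g x y) -> sqint N a b f = sqint N a b g.
Proof. intros H; unfold sqint; apply RInt_ext; intros; apply RInt_ext; intros; auto. Qed.
Lemma sqint_const N a b c : sqint N a b (fun _ _ => c) = c * hN N * hN N.
Proof. unfold sqint. rewrite (RInt_ext _ (fun _ => hN N * c)).
 rewrite RInt_const. unfold scal; simpl; unfold mult; simpl; ring.
 intros; rewrite RInt_const. unfold scal; simpl; unfold mult; simpl; ring. Qed.

Definition indi a1 b1 (a b : nat) : R := if andb (Nat.eqb a a1) (Nat.eqb b b1) then 1 else 0.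
Lemma dsum_ind N a1 b1 g : (1 <= a1 <= N)%nat -> (1 <= b1 <= N)%nat ->
  sum1 N (fun a => sum1 N (fun b => indi a1 b1 a b * g a b)) = g a1 b1.
Proof. intros. rewrite (sum1_ext _ _ (fun a => if Nat.eqb a a1 then g a b1 else 0)).
 - rewrite sum1_point, !leb_t by lia. reflexivity.
 - intros a _. rewrite (sum1_ext _ _ (fun b => if Nat.eqb b b1 then (if Nat.eqb a a1 then g a b else 0) else 0)).
   + rewrite sum1_point, !leb_t by lia. reflexivity.
   + intros b _; unfold indi; destruct (Nat.eqb a a1), (Nat.eqb b b1); simpl; ring. Qed.

Lemma even_S n : Nat.even (S n) = negb (Nat.even n).
Proof. rewrite Nat.even_succ, <- Nat.negb_even. reflexivity. Qed.
Lemma sum1_const n c : sum1 n (fun _ => c) = INR n * c.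
Proof. induction n; simpl sum1; [simpl; ring| rewrite IHn, S_INR; ring]. Qed.
Lemma count m a u v : sum1 (2*m) (fun b => if Nat.even (a+b) then u else v) = INR m * (u + v).
Proof. induction m. simpl; ring.
 replace (2 * S m)%nat with (S (S (2*m))) by lia. cbn [sum1]. rewrite IHm, S_INR.
 rewrite !Nat.add_succ_r, !even_S. destruct (Nat.even (a + 2 * m)%nat); simpl; ring. Qed.
Lemma alt m p : sum1 (2*m+1) (fun j => if Nat.even (j + 2*p) then 1 else -1) = -1.
Proof. induction m. replace (2*0+1)%nat with 1%nat by lia. cbn [sum1]. rewrite Nat.even_add_mul_2. simpl. ring.
 replace (2 * S m + 1)%nat with (S (S (2*m+1))) by lia. cbn [sum1]. rewrite IHm.
 rewrite !Nat.even_add_mul_2.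
 replace (S (2*m+1)) with (0 + 2 * S m)%nat by lia. rewrite Nat.even_add_mul_2.
 replace (S (0 + 2 * S m)) with (1 + 2 * S m)%nat by lia. rewrite Nat.even_add_mul_2. simpl. ring. Qed.

Definition sg (a b : nat) : R := if Nat.even (a + b) then 1 else -1.

Theorem theorem4p1 (N : nat) (xi eta : nat -> nat -> R) :
  (0 < N)%nat -> Nat.Even N ->
  (forall q : nat -> nat -> R,
     sum1 N (fun a => sum1 N (fun b =>
       if Nat.even (a + b) then sqint N a b (fun _ _ => q a b) else 0)) = 0 ->
     sum1 N (fun a => sum1 N (fun b =>
       if Nat.even (a + b) then 0 else sqint N a b (fun _ _ => q a b))) = 0 ->
     sum1 N (fun a => sum1 N (fun b =>
       sqint N a b (fun x y => divQ N xi eta a b x y * q a b))) = 0) ->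
  (forall j k, (1 <= j <= N)%nat -> (1 <= k <= N)%nat ->
     Rabs (sqint N j k (divQ N xi eta j k)) = hN N ^ 3) /\
  (exists gamma : R, Rabs gamma = hN N ^ 3 /\
     forall j k, (1 <= j <= N)%nat -> (1 <= k <= N)%nat ->
       sqint N j k (divQ N xi eta j k) =
         (if Nat.even (j + k) then gamma else - gamma)).
Proof.
 intros HN [m Hm] H.
 assert (Hm1 : (1 <= m)%nat) by lia.
 pose proof (hN_pos N HN) as Hh.
 set (D := fun a b => hN N * hN N * (Kx N xi a b + Ky N eta a b)).
 assert (HD : forall a b c, sqint N a b (fun x y => divQ N xi eta a b x y * c) = D a b * c).
 { intros. rewrite (sqint_ext _ _ _ _ (fun x y => (Kx N xi a b + Ky N eta a b + Pd N a b x) * c)).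
   rewrite sqint_K by auto. unfold D; ring. intros; rewrite divQ_eq; auto. }
 assert (HD0 : forall a b, sqint N a b (divQ N xi eta a b) = D a b).
 { intros. rewrite (sqint_ext _ _ _ _ (fun x y => divQ N xi eta a b x y * 1)), HD. ring. intros; ring. }
 assert (Hcol : forall a1 b1 a2 b2, (1 <= a1 <= N)%nat -> (1 <= b1 <= N)%nat -> (1 <= a2 <= N)%nat -> (1 <= b2 <= N)%nat ->
     Nat.even (a1 + b1) = Nat.even (a2 + b2) -> D a1 b1 = D a2 b2).
 { intros a1 b1 a2 b2 Ha1 Hb1 Ha2 Hb2 E.
   pose (q := fun a b => indi a1 b1 a b - indi a2 b2 a b).
   assert (Hs : forall g, sum1 N (fun a => sum1 N (fun b => q a b * g a b)) = g a1 b1 - g a2 b2).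
   { intros g. unfold q.
     rewrite (sum1_ext N _ (fun a => sum1 N (fun b => indi a1 b1 a b * g a b - indi a2 b2 a b * g a b)))
       by (intros; apply sum1_ext; intros; ring).
     rewrite dsum_minus, !dsum_ind; auto. }
   assert (L : sum1 N (fun a => sum1 N (fun b => sqint N a b (fun x y => divQ N xi eta a b x y * q a b))) = 0).
   { apply H.
   - rewrite (sum1_ext N _ (fun a => sum1 N (fun b => q a b * (if Nat.even (a + b) then hN N * hN N else 0)))).
     rewrite Hs, E. ring.
     intros; apply sum1_ext; intros. rewrite sqint_const. destruct (Nat.even (i + i0)%nat); ring.
   - rewrite (sum1_ext N _ (fun a => sum1 N (fun b => q a b * (if Nat.even (a + b) then 0 else hN N * hN N)))).
     rewrite Hs, E. ring.
     intros; apply sum1_ext; intros. rewrite sqint_const. destruct (Nat.even (i + i0)%nat); ring. }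
   rewrite (sum1_ext N _ (fun a => sum1 N (fun b => q a b * D a b))) in L
     by (intros; apply sum1_ext; intros; rewrite HD; ring).
   rewrite Hs in L. lra. }
 set (al := D 1%nat 1%nat). set (be := D 1%nat 2%nat).
 assert (Hab : forall a b, (1 <= a <= N)%nat -> (1 <= b <= N)%nat -> D a b = if Nat.even (a + b) then al else be).
 { intros a b Ha Hb. destruct (Nat.even (a + b)) eqn:E; apply Hcol; try lia; rewrite E; reflexivity. }
 assert (Wg : forall (w : nat -> nat -> R) u v, (forall a b, w a b * (if Nat.even (a + b) then al else be) = if Nat.even (a + b) then u else v) ->
    sum1 N (fun a => sum1 N (fun b => w a b * D a b)) = INR N * (INR m * (u + v))).
 { intros w u v Hw. transitivity (sum1 N (fun a => sum1 (2*m) (fun b => if Nat.even (a + b) then u else v))).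
   - apply sum1_ext; intros a Ha. rewrite <- Hm. apply sum1_ext; intros b Hb. rewrite Hab by lia. apply Hw.
   - rewrite <- sum1_const. apply sum1_ext; intros; apply count. }
 assert (W1 : INR N * (INR m * (al + be)) = 0).
 { rewrite <- (Wg (fun _ _ => 1)) by (intros; destruct (Nat.even (a + b)%nat); ring).
   unfold D. rewrite Wsum by (intros; ring || lia).
   rewrite (sum1_ext (N - 1) _ (fun _ => 0)) by (intros; unfold Rdiv; ring). rewrite sum1_zero. ring. }
 assert (W2 : INR N * (INR m * (al - be)) = - hN N).
 { unfold Rminus. rewrite <- (Wg sg) by (intros; unfold sg; destruct (Nat.even (a + b)%nat); ring).
   unfold D. rewrite Wsum.
   2: lia.
   2, 3: intros; unfold sg; rewrite ?Nat.add_succ_r; simpl (S a + b)%nat; simpl (S a + S b)%nat; rewrite ?Nat.add_succ_r, ?even_S;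
         destruct (Nat.even (a + b)%nat); simpl; ring.
   rewrite (sum1_ext (N - 1) _ (fun j => 2 / hN N * (if Nat.even (j + 2 * m) then 1 else -1))).
   2:{ intros j Hj. unfold sg. simpl (S j + N)%nat. rewrite even_S. replace (Nat.even (j + 2*m)%nat) with (Nat.even (j+N)%nat) by (rewrite Hm; reflexivity). destruct (Nat.even (j+N)%nat); simpl; field; lra. }
   rewrite sum1_scal. replace (N - 1)%nat with (2 * (m - 1) + 1)%nat by lia. rewrite alt. field. lra. }
 assert (HN' : INR N = 2 * INR m) by (rewrite Hm, mult_INR; reflexivity).
 assert (Hm0 : 0 < INR m) by (apply lt_0_INR; lia).
 assert (Hbe : be = - al).
 { assert (Hs : al + be = 0).
   { apply (Rmult_eq_reg_l (INR N * INR m)). rewrite Rmult_0_r, <- W1. ring.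
     rewrite HN'. nra. }
   lra. }
 rewrite Hbe in W2.
 assert (Hal : al = - hN N ^ 3).
 { assert (W2' : al = - hN N / (2 * INR N * INR m)).
   { rewrite <- W2. field. rewrite HN'. nra. }
   rewrite W2'. unfold hN. rewrite HN'. field. lra. }
 assert (Hp : 0 <= hN N ^ 3) by (apply pow_le; lra).
 split.
 - intros j k Hj Hk. rewrite HD0, Hab by lia. destruct (Nat.even (j + k)%nat).
   + rewrite Hal, Rabs_Ropp, Rabs_pos_eq; auto.
   + rewrite Hbe, Hal, Ropp_involutive, Rabs_pos_eq; auto.
 - exists al. split.
   + rewrite Hal, Rabs_Ropp, Rabs_pos_eq; auto.
   + intros j k Hj Hk. rewrite HD0, Hab by lia. rewrite Hbe. reflexivity.
Qed.
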